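(* Let $\lambda,\mu$ be partitions with at most $n$ parts (viewed as elements of $\mathbb{Z}^n$) such that $|\lambda|\ge|\mu|$. Then $$\widetilde{K}^{C_n}_{\lambda,\mu}(q)=q^{\frac{|\lambda|-|\mu|}{2}}\sum_{\gamma\in\widetilde{\mathcal{P}}_n}\ \sum_{\sigma\in S_n}(-1)^{l(\sigma)}\,c(\sigma\circ\lambda-\gamma)\,K^{A_{n-1}}_{\gamma,\mu}(q),$$ $$\widetilde{K}^{D_n}_{\lambda,\mu}(q)=q^{\frac{|\lambda|-|\mu|}{2}}\sum_{\gamma\in\widetilde{\mathcal{P}}_n}\ \sum_{\sigma\in S_n}(-1)^{l(\sigma)}\,d(\sigma\circ\lambda-\gamma)\,K^{A_{n-1}}_{\gamma,\mu}(q).$$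
   Context: Fix $n\ge1$. Notation: $x^\beta=x_1^{\beta_1}\cdots x_n^{\beta_n}$, $|\beta|=\sum_i\beta_i$, $\rho_n=(n,n-1,\dots,1)$. The symmetric group $S_n$ acts on $\mathbb{Z}^n$ by permuting coordinates; $l(\sigma)$ is the number of inversions of $\sigma$; the dot action is $\sigma\circ\beta=\sigma(\beta+\rho_n)-\rho_n$. $\widetilde{\mathcal{P}}_n=\{\gamma\in\mathbb{Z}^n:\gamma_1\ge\cdots\ge\gamma_n\}$. $q$-partition functions: $\mathcal{P}^A_q(\beta)$, $\mathcal{P}^C_q(\beta)$, $\mathcal{P}^D_q(\beta)$ are the coefficients of $x^\beta$ in respectively $\prod_{i<j}(1-qx_i/x_j)^{-1}$, $\prod_{i<j}(1-qx_i/x_j)^{-1}\prod_{r\le s}(1-qx_rx_s)^{-1}$, $\prod_{i<j}(1-qx_i/x_j)^{-1}\prod_{r<s}(1-qx_rx_s)^{-1}$ (all indices in $\{1,\dots,n\}$). $c(\beta)$ (resp. $d(\beta)$) is the coefficient of $x^{-\beta}$ in $\prod_{1\le r\le s\le n}(1-\frac1{x_rx_s})^{-1}$ (resp. $\prod_{1\le r<s\le n}(1-\frac1{x_rx_s})^{-1}$). For $\gamma,\mu\in\mathbb{Z}^n$: $K^{A_{n-1}}_{\gamma,\mu}(q)=\sum_{\sigma\in S_n}(-1)^{l(\sigma)}\mathcal{P}^A_q(\sigma(\gamma+\rho_n)-(\mu+\rho_n))$ (for partitions this is the usual Kostka–Foulkes polynomial), and for $X\in\{C,D\}$: $\widetilde{K}^{X_n}_{\lambda,\mu}(q)=\sum_{\sigma\in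 S_n}(-1)^{l(\sigma)}\mathcal{P}^X_q(\sigma(\lambda+\rho_n)-(\mu+\rho_n))$. *)

(* Defs.v *)
From HB Require Import structures.
From mathcomp Require Import all_boot all_order all_algebra all_fingroup.
Set Implicit Arguments. Unset Strict Implicit. Unset Printing Implicit Defensive.
Import Order.TTheory GRing.Theory Num.Theory.
Local Open Scope ring_scope.

(* Vectors in Z^n, coordinates indexed by 'I_n (0-based: coordinate i <-> x_(i+1)). *)
Notation vec n := {ffun 'I_n -> int}.

Definition wt n (b : vec n) : int := \sum_(i < n) b i.

Definition rho n : vec n := [ffun i : 'I_n => ((n - i)%N)%:Z].

Definition evec n (i : 'I_n) : vec n := [ffun k => ((k == i) : nat)%:Z].

Definition pact n (s : 'S_n) (b : vec n) : vec n := [ffun i => b (s^-1%g i)].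

Definition dot n (s : 'S_n) (b : vec n) : vec n := pact s (b + rho n) - rho n.

(* sign (-1)^{l(s)}; the parity of the number of inversions is odd_perm s *)
Definition sgn (R : pzRingType) n (s : 'S_n) : R := (-1) ^+ odd_perm s.

Definition nonincr n (g : vec n) : bool :=
  [forall i : 'I_n, forall j : 'I_n, (i <= j)%N ==> (g j <= g i)].

Definition is_partition n (l : vec n) : bool :=
  nonincr l && [forall i : 'I_n, 0 <= l i].

(* Positive roots indexing the factors of the products. *)
Definition rootsA n : seq (vec n) :=
  [seq evec i - evec j | i : 'I_n <- enum 'I_n, j <- filter (fun j : 'I_n => (i < j)%N) (enum 'I_n)].
Definition pairsC n : seq (vec n) :=
  [seq evec r + evec s | r : 'I_n <- enum 'I_n, s <- filter (fun s : 'I_n => (r <= s)%N) (enum 'I_n)].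
Definition pairsD n : seq (vec n) :=
  [seq evec r + evec s | r : 'I_n <- enum 'I_n, s <- filter (fun s : 'I_n => (r < s)%N) (enum 'I_n)].

(* Coefficient of x^b in prod_{a in rs} (1 - q x^a)^{-1}:
   the sum of q^(sum m) over multiplicity vectors m : rs -> N with
   sum_k m_k rs_k = b.  Every multiplicity in such a decomposition is
   bounded by sum_i |b_i| for the root systems used below,
   so restricting to m_k <= sum_i |b_i| loses nothing. *)
Definition vpf (R : pzRingType) n (rs : seq (vec n)) (q : R) (b : vec n) : R :=
  \sum_(m : {ffun 'I_(size rs) -> 'I_((\sum_(i < n) `|b i|)%N).+1}
         | \sum_(k < size rs) rs`_k *+ m k == b)
     q ^+ (\sum_(k < size rs) (m k : nat))%N.

Definition PA (R : pzRingType) n (q : R) (b : vec n) : R := vpf (rootsA n) q b.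
Definition PC (R : pzRingType) n (q : R) (b : vec n) : R :=
  vpf (rootsA n ++ pairsC n) q b.
Definition PD (R : pzRingType) n (q : R) (b : vec n) : R :=
  vpf (rootsA n ++ pairsD n) q b.

(* c(b), d(b): coefficient of x^{-b} in prod (1 - 1/(x_r x_s))^{-1}, i.e. the
   number of ways to write b as a sum of e_r + e_s (r <= s, resp. r < s). *)
Definition cfun (R : pzRingType) n (b : vec n) : R := vpf (pairsC n) 1 b.
Definition dfun (R : pzRingType) n (b : vec n) : R := vpf (pairsD n) 1 b.

Definition KA (R : pzRingType) n (q : R) (g mu : vec n) : R :=
  \sum_(s : 'S_n) sgn R s * PA q (pact s (g + rho n) - (mu + rho n)).
Definition KC (R : pzRingType) n (q : R) (la mu : vec n) : R :=
  \sum_(s : 'S_n) sgn R s * PC q (pact s (la + rho n) - (mu + rho n)).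
Definition KD (R : pzRingType) n (q : R) (la mu : vec n) : R :=
  \sum_(s : 'S_n) sgn R s * PD q (pact s (la + rho n) - (mu + rho n)).

Definition fsum_eq (T : eqType) (R : nmodType) (P : pred T) (F : T -> R) (v : R)
  : Prop :=
  exists s : seq T, [/\ uniq s, all P s,
    (forall x, P x -> x \notin s -> F x = 0) & v = \sum_(x <- s) F x].

(* Main.v *)
Require Import Defs.
From HB Require Import structures.
From mathcomp Require Import all_boot all_order all_algebra all_fingroup.
From mathcomp Require Import zify ring lra.
Set Implicit Arguments. Unset Strict Implicit. Unset Printing Implicit Defensive.
Import Order.TTheory GRing.Theory Num.Theory.
Local Open Scope ring_scope.

Section Lin.
Variable n : nat.
Implicit Types (a b : vec n) (w : 'I_n -> int).

Definition phi w b : int := \sum_i w i * b i.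
Lemma phiD w a b : phi w (a + b) = phi w a + phi w b.
Proof. by rewrite /phi -big_split; apply: eq_bigr => i _; rewrite ffunE mulrDr. Qed.
Lemma phi0 w : phi w 0 = 0.
Proof. by rewrite /phi big1 // => i _; rewrite ffunE mulr0. Qed.
Lemma phiN w a : phi w (- a) = - phi w a.
Proof. by rewrite /phi -sumrN; apply: eq_bigr => i _; rewrite ffunE mulrN. Qed.
Lemma phiB w a b : phi w (a - b) = phi w a - phi w b.
Proof. by rewrite phiD phiN. Qed.
Lemma phiMn w a k : phi w (a *+ k) = phi w a *+ k.
Proof. by rewrite /phi -sumrMnl; apply: eq_bigr => i _; rewrite ffunMnE mulrnAr. Qed.
Lemma phi_sum w (I : Type) (r : seq I) (P : pred I) (F : I -> vec n) :
  phi w (\sum_(i <- r | P i) F i) = \sum_(i <- r | P i) phi w (F i).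
Proof. exact: (big_morph (phi w) (phiD w) (phi0 w)). Qed.

Lemma wt_phi b : wt b = phi (fun _ => 1) b.
Proof. by rewrite /wt /phi; apply: eq_bigr => i _; rewrite mul1r. Qed.
Lemma wtD a b : wt (a + b) = wt a + wt b. Proof. by rewrite !wt_phi phiD. Qed.
Lemma wtB a b : wt (a - b) = wt a - wt b. Proof. by rewrite !wt_phi phiB. Qed.
Lemma wt_sum (I : Type) (r : seq I) (P : pred I) (F : I -> vec n) :
  wt (\sum_(i <- r | P i) F i) = \sum_(i <- r | P i) wt (F i).
Proof. by rewrite wt_phi phi_sum; apply: eq_bigr => i _; rewrite wt_phi. Qed.
Lemma wtMn a k : wt (a *+ k) = wt a *+ k. Proof. by rewrite !wt_phi phiMn. Qed.

Definition pre (c : 'I_n) b := phi (fun i => ((i <= c)%N : nat)%:Z) b.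

Lemma Posz_sum (I : Type) (r : seq I) (P : pred I) (F : I -> nat) :
  ((\sum_(i <- r | P i) F i)%N)%:Z = \sum_(i <- r | P i) (F i)%:Z.
Proof. by rewrite -natz natr_sum; apply: eq_bigr => i _; rewrite natz. Qed.

Lemma pre_le c b : pre c b <= (\sum_i `|b i|%N)%N%:Z.
Proof.
rewrite /pre /phi Posz_sum; apply: ler_sum => i _; rewrite abszE.
case: leqP => _; rewrite ?mul1r ?mul0r ?ler_norm //.
Qed.

End Lin.

Section Pact.
Variable n : nat.
Implicit Types (a b : vec n) (s t : 'S_n).

Lemma pactD s a b : pact s (a + b) = pact s a + pact s b.
Proof. by apply/ffunP => i; rewrite !ffunE. Qed.
Lemma pact0 s : pact s 0 = 0.
Proof. by apply/ffunP => i; rewrite !ffunE. Qed.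
Lemma pactN s a : pact s (- a) = - pact s a.
Proof. by apply/ffunP => i; rewrite !ffunE. Qed.
Lemma pactB s a b : pact s (a - b) = pact s a - pact s b.
Proof. by rewrite pactD pactN. Qed.
Lemma pactMn s a k : pact s (a *+ k) = pact s a *+ k.
Proof. by apply/ffunP => i; rewrite !(ffunE, ffunMnE). Qed.
Lemma pact_sum s (I : Type) (r : seq I) (P : pred I) (F : I -> vec n) :
  pact s (\sum_(i <- r | P i) F i) = \sum_(i <- r | P i) pact s (F i).
Proof. exact: (big_morph (pact s) (pactD s) (pact0 s)). Qed.
Lemma pactM s t b : pact s (pact t b) = pact (t * s) b.
Proof. by apply/ffunP => i; rewrite !ffunE invMg permM. Qed.
Lemma pact1 b : pact 1 b = b.
Proof. by apply/ffunP => i; rewrite !ffunE invg1 perm1. Qed.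
Lemma pactK s : cancel (pact s) (pact s^-1).
Proof. by move=> b; rewrite pactM mulgV pact1. Qed.
Lemma pact_inj s : injective (pact s).
Proof. exact: can_inj (pactK s). Qed.
Lemma pact_evec s i : pact s (evec i) = evec (s i).
Proof.
apply/ffunP => l; rewrite !ffunE; congr (Posz (nat_of_bool _)).
by apply/eqP/eqP => [<-|->]; rewrite ?permKV ?permK.
Qed.
Lemma pactE s b i : pact s b i = b (s^-1%g i). Proof. by rewrite ffunE. Qed.
Lemma pactE' s b i : pact s b (s i) = b i. Proof. by rewrite ffunE permK. Qed.

Lemma sum_pact s (F : int -> int) b : \sum_i F (pact s b i) = \sum_i F (b i).
Proof.
rewrite (reindex_inj (@perm_inj _ s)) /=.
by apply: eq_bigr => i _; rewrite pactE'.
Qed.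
Lemma sumn_pact s (F : int -> nat) b : (\sum_i F (pact s b i) = \sum_i F (b i))%N.
Proof.
rewrite (reindex_inj (@perm_inj _ s)) /=.
by apply: eq_bigr => i _; rewrite pactE'.
Qed.
Lemma wt_pact s b : wt (pact s b) = wt b.
Proof. exact: (sum_pact s id). Qed.
Lemma wt_dot s b : wt (dot s b) = wt b.
Proof. by rewrite /dot wtB wt_pact wtD addrK. Qed.

Lemma sgnM (R : pzRingType) s t : sgn R (s * t) = sgn R s * sgn R t.
Proof. by rewrite /sgn odd_permM signr_addb. Qed.
Lemma sgn_sq (R : pzRingType) s : sgn R s * sgn R s = 1.
Proof. by rewrite /sgn -signr_addb addbb. Qed.

Lemma pre_evec (c i : 'I_n) : pre c (evec i) = ((i <= c)%N : nat)%:Z.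
Proof.
rewrite /pre /phi (bigD1 i) //= big1 ?addr0; first by rewrite ffunE eqxx mulr1.
by move=> j /negbTE ji; rewrite ffunE ji mulr0.
Qed.
Lemma wt_evec (i : 'I_n) : wt (evec i) = 1.
Proof.
rewrite /wt (bigD1 i) //= big1 ?addr0; first by rewrite ffunE eqxx.
by move=> j /negbTE ji; rewrite ffunE ji.
Qed.
End Pact.

Section VPF.
Variable n : nat.
Variable R : pzRingType.

Definition vpfI (I : finType) (r : I -> vec n) (q : R) (N : nat) (b : vec n) : R :=
  \sum_(m : {ffun I -> 'I_N.+1} | \sum_i r i *+ m i == b) q ^+ (\sum_i (m i : nat))%N.

Lemma vpfE (rs : seq (vec n)) q b :
  vpf rs q b = vpfI (fun k : 'I_(size rs) => rs`_k) q (\sum_i `|b i|)%N b.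
Proof. by []. Qed.

Lemma vpfI_widen (I : finType) (r : I -> vec n) q N1 N2 b :
  (forall m : I -> nat, \sum_i r i *+ m i = b -> forall i, (m i <= N1)%N /\ (m i <= N2)%N) ->
  vpfI r q N1 b = vpfI r q N2 b.
Proof.
wlog le12 : N1 N2 / (N1 <= N2)%N.
  move=> H Hb; case: (leqP N1 N2) => h; first exact: H.
  symmetry; apply: H; [exact: ltnW | by move=> m /Hb Hm i; case: (Hm i)].
move=> Hb; rewrite /vpfI.
pose h (m : {ffun I -> 'I_N1.+1}) : {ffun I -> 'I_N2.+1} :=
  [ffun i => widen_ord (le12 : (N1.+1 <= N2.+1)%N) (m i)].
pose h' (m : {ffun I -> 'I_N2.+1}) : {ffun I -> 'I_N1.+1} := [ffun i => inord (m i)].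
have hE m i : (h m i : nat) = m i by rewrite ffunE.
rewrite (reindex_onto h h').
  apply: eq_big => j; last by move=> _; congr (_ ^+ _); apply: eq_bigr => i _; rewrite ffunE.
  have -> : h' (h j) == j.
    by apply/eqP/ffunP => i; apply: val_inj; rewrite !ffunE /= inordK.
  rewrite andbT; congr (_ == _); apply: eq_bigr => i _; by rewrite ffunE.
move=> m /eqP Hm; apply/ffunP => i; apply: val_inj; rewrite !ffunE /= inordK //.
by have [] := Hb (fun i => m i) Hm i.
Qed.

Lemma vpfI_reindex (I J : finType) (e : J -> I) (r : I -> vec n) q N b :
  bijective e -> vpfI (fun j => r (e j)) q N b = vpfI r q N b.
Proof.
case=> e' ee' e'e; rewrite /vpfI.
pose h (m : {ffun J -> 'I_N.+1}) : {ffun I -> 'I_N.+1} := [ffun i => m (e' i)].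
pose h' (m : {ffun I -> 'I_N.+1}) : {ffun J -> 'I_N.+1} := [ffun j => m (e j)].
have hb : bijective h.
  exists h' => m; apply/ffunP => x; rewrite !ffunE ?ee' ?e'e //.
rewrite (reindex h); last by apply: onW_bij.
apply: eq_big => m.
  congr (_ == _); rewrite (reindex e) /=; last by apply: onW_bij; exists e'.
  by apply: eq_bigr => j _; rewrite ffunE ee'.
move=> _; congr (_ ^+ _); rewrite (reindex e) /=; last by apply: onW_bij; exists e'.
by apply: eq_bigr => j _; rewrite ffunE ee'.
Qed.

Lemma vpfI_eq (I : finType) (r1 r2 : I -> vec n) q N b :
  r1 =1 r2 -> vpfI r1 q N b = vpfI r2 q N b.
Proof.
move=> e; rewrite /vpfI; apply: eq_bigl => m; congr (_ == _).
by apply: eq_bigr => i _; rewrite e.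
Qed.

End VPF.

Section VPF2.
Variable n : nat.
Variable R : pzRingType.

Lemma vpfI_sum (I1 I2 : finType) (r1 : I1 -> vec n) (r2 : I2 -> vec n) (q : R) N b :
 vpfI (fun i : I1 + I2 => match i with inl x => r1 x | inr y => r2 y end) q N b =
 \sum_(m2 : {ffun I2 -> 'I_N.+1}) q ^+ (\sum_j (m2 j : nat))%N *
    vpfI r1 q N (b - \sum_j r2 j *+ m2 j).
Proof.
rewrite /vpfI; symmetry.
under eq_bigr => m2 _ do rewrite mulr_sumr big_mkcond.
rewrite pair_big /= [RHS]big_mkcond.
pose h (p : {ffun I2 -> 'I_N.+1} * {ffun I1 -> 'I_N.+1}) : {ffun I1 + I2 -> 'I_N.+1} :=
  [ffun i => match i with inl x => p.2 x | inr y => p.1 y end].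
pose h' (m : {ffun I1 + I2 -> 'I_N.+1}) := ([ffun y => m (inr y)], [ffun x => m (inl x)]).
have hb : bijective h.
  exists h' => [[m2 m1]|m]; rewrite /h /h' /=.
    by congr pair; apply/ffunP => x; rewrite !ffunE.
  by apply/ffunP => -[x|y]; rewrite !ffunE.
rewrite [RHS](reindex h); last by apply: onW_bij.
apply: eq_bigr => -[m2 m1] _ /=.
rewrite big_sumType /=.
have -> : (\sum_i (h (m2, m1) i : nat))%N = (\sum_j (m2 j : nat) + \sum_i (m1 i : nat))%N.
  by rewrite big_sumType /= addnC; congr addn; apply: eq_bigr => i _; rewrite ffunE.
have -> : (\sum_i r1 i *+ h (m2, m1) (inl i) + \sum_i r2 i *+ h (m2, m1) (inr i) == b)
        = (\sum_i r1 i *+ m1 i == b - \sum_j r2 j *+ m2 j).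
  under eq_bigr => i _ do rewrite ffunE /=.
  under [X in _ + X]eq_bigr => i _ do rewrite ffunE /=.
  by apply/eqP/eqP => H; [rewrite -H addrK | rewrite H subrK].
by case: ifP => _; rewrite ?exprD.
Qed.

End VPF2.

Section Cone.
Variable n : nat.

Definition goodr (r : vec n) := (forall c, 0 <= pre c r) /\ exists c, 1 <= pre c r.
Definition prenn (y : vec n) := forall c, 0 <= pre c y.

Lemma prenn_sum (I : finType) (r : I -> vec n) (m : I -> nat) :
  (forall i, prenn (r i)) -> prenn (\sum_i r i *+ m i).
Proof.
move=> hr c; rewrite /pre phi_sum; apply: sumr_ge0 => i _.
by rewrite phiMn; apply: mulrn_wge0; apply: hr.
Qed.

Lemma cone (I : finType) (r : I -> vec n) (m : I -> nat) y b :
  (forall i, goodr (r i)) -> prenn y ->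
  \sum_i r i *+ m i + y = b -> forall i, (m i <= \sum_l `|b l|)%N.
Proof.
move=> hr hy e i; have [_ [c hc]] := hr i.
rewrite -lez_nat; apply: le_trans (pre_le c b).
rewrite -e /pre phiD phi_sum (bigD1 i) //= -addrA.
have h1 : (m i)%:Z <= phi (fun i0 : 'I_n => Posz (i0 <= c)%N) (r i *+ m i).
  rewrite phiMn -mulr_natr natz -{1}(mul1r (m i)%:Z); exact: ler_wpM2r.
have h2 : 0 <= \sum_(j | j != i) phi (fun i0 : 'I_n => Posz (i0 <= c)%N) (r j *+ m j).
  apply: sumr_ge0 => j _; rewrite phiMn; apply: mulrn_wge0; apply: (hr j).1.
have h3 := hy c; apply: le_trans h1 _; rewrite lerDl; exact: addr_ge0.
Qed.

End Cone.

Section Roots.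
Variable n : nat.

Lemma memA (r : vec n) : r \in rootsA n ->
  exists i j : 'I_n, (i < j)%N /\ r = evec i - evec j.
Proof.
by case/allpairsPdep => i [j [_ hj ->]]; exists i, j; move: hj; rewrite mem_filter => /andP[].
Qed.

Lemma memC (r : vec n) : r \in pairsC n <->
  exists a b : 'I_n, (a <= b)%N /\ r = evec a + evec b.
Proof.
split; first by case/allpairsPdep => i [j [_ hj ->]]; exists i, j; move: hj; rewrite mem_filter => /andP[].
case=> a [b [ab ->]]; apply/allpairsPdep; exists a, b; split => //; first by rewrite mem_enum.
by rewrite mem_filter ab mem_enum.
Qed.

Lemma memD (r : vec n) : r \in pairsD n <->
  exists a b : 'I_n, (a < b)%N /\ r = evec a + evec b.
Proof.
split; first by case/allpairsPdep => i [j [_ hj ->]]; exists i, j; move: hj; rewrite mem_filter => /andP[].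
case=> a [b [ab ->]]; apply/allpairsPdep; exists a, b; split => //; first by rewrite mem_enum.
by rewrite mem_filter ab mem_enum.
Qed.

Lemma goodA r : r \in rootsA n -> goodr r.
Proof.
case/memA => i [j [ij ->]]; split.
  move=> c; rewrite /pre phiB -!/(pre _ _) !pre_evec.
  case: (leqP j c) => jc; first by rewrite (leq_trans (ltnW ij) jc).
  by rewrite subr0.
exists i; rewrite /pre phiB -!/(pre _ _) !pre_evec leqnn.
by rewrite leqNgt ij subr0.
Qed.

Lemma goodP2 (a b : 'I_n) : (a <= b)%N -> goodr (evec a + evec b).
Proof.
move=> ab; split.
  by move=> c; rewrite /pre phiD -!/(pre _ _) !pre_evec.
by exists b; rewrite /pre phiD -!/(pre _ _) !pre_evec leqnn ab.
Qed.

Lemma goodC r : r \in pairsC n -> goodr r.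
Proof. by case/memC => a [b [ab ->]]; apply: goodP2. Qed.
Lemma goodD r : r \in pairsD n -> goodr r.
Proof. by case/memD => a [b [ab ->]]; apply: goodP2; apply: ltnW. Qed.

Lemma wtA r : r \in rootsA n -> wt r = 0.
Proof. by case/memA => i [j [_ ->]]; rewrite wtB !wt_evec subrr. Qed.
Lemma wtC r : r \in pairsC n -> wt r = 2.
Proof. by case/memC => i [j [_ ->]]; rewrite wtD !wt_evec. Qed.
Lemma wtD' r : r \in pairsD n -> wt r = 2.
Proof. by case/memD => i [j [_ ->]]; rewrite wtD !wt_evec. Qed.

Lemma nnP2 (a b : 'I_n) l : 0 <= (evec a + evec b) l.
Proof. by rewrite !ffunE. Qed.
Lemma nnC r l : r \in pairsC n -> 0 <= r l.
Proof. by case/memC => i [j [_ ->]]; apply: nnP2. Qed.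
Lemma nnD r l : r \in pairsD n -> 0 <= r l.
Proof. by case/memD => i [j [_ ->]]; apply: nnP2. Qed.

Lemma pactC s r : r \in pairsC n -> pact s r \in pairsC n.
Proof.
case/memC => a [b [ab ->]]; rewrite pactD !pact_evec; apply/memC.
case: (leqP (s a) (s b)) => h; first by exists (s a), (s b).
by exists (s b), (s a); rewrite addrC (ltnW h).
Qed.
Lemma pactD' s r : r \in pairsD n -> pact s r \in pairsD n.
Proof.
case/memD => a [b [ab ->]]; rewrite pactD !pact_evec; apply/memD.
case: (ltngtP (s a) (s b)) => h; first by exists (s a), (s b).
  by exists (s b), (s a); rewrite addrC h.
by move/val_inj/perm_inj: h => e; rewrite e ltnn in ab.
Qed.

Lemma evec2_inj (a b a' b' : 'I_n) : (a <= b)%N -> (a' <= b')%N ->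
  evec a + evec b = evec a' + evec b' -> a = a' /\ b = b'.
Proof.
move=> ab ab' E.
have El l : ((l == a) : nat) + ((l == b) : nat) = ((l == a') : nat) + ((l == b') : nat) :> nat.
  by move: (congr1 (fun v : vec n => v l) E); rewrite !ffunE => -[].
case: (eqVneq a a') => [eaa'|naa'].
  subst a'; split => //; have := El b; rewrite eqxx.
  by case: (eqVneq b b') => // _; case: (b == a) => /eqP.
have := El a; rewrite eqxx eq_sym (negbTE naa').
case: (eqVneq a b') => [eab'|]; last by case: (a == b) => /eqP.
move=> _; have := El a'; rewrite eqxx eq_sym (negbTE naa').
case: (eqVneq a' b) => [eab|]; last by case: (a' == b') => /eqP.
case: (eqVneq a' b') => //= nab' _.
have : val a' = val b' by apply/eqP; rewrite eqn_leq ab' /= -eab' eab ab.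
by move/val_inj => e; rewrite e eqxx in nab'.
Qed.

Lemma uniqC : uniq (pairsC n).
Proof.
apply: allpairs_uniq_dep; [exact: enum_uniq | by move=> x _; apply: filter_uniq; apply: enum_uniq|].
move=> [x1 y1] [x2 y2] /allpairsPdep[u1 [v1 [_ h1 /= e1]]] /allpairsPdep[u2 [v2 [_ h2 /= e2]]] /= E.
case: e1 => e1 e1'; case: e2 => e2 e2'; subst.
move: h1 h2; rewrite !mem_filter => /andP[l1 _] /andP[l2 _].
have [-> ->] := evec2_inj l1 l2 E.
by [].
Qed.

Lemma uniqD : uniq (pairsD n).
Proof.
apply: allpairs_uniq_dep; [exact: enum_uniq | by move=> x _; apply: filter_uniq; apply: enum_uniq|].
move=> [x1 y1] [x2 y2] /allpairsPdep[u1 [v1 [_ h1 /= e1]]] /allpairsPdep[u2 [v2 [_ h2 /= e2]]] /= E.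
case: e1 => e1 e1'; case: e2 => e2 e2'; subst.
move: h1 h2; rewrite !mem_filter => /andP[l1 _] /andP[l2 _].
have [-> ->] := evec2_inj (ltnW l1) (ltnW l2) E.
by [].
Qed.

End Roots.

Section Inv.
Variable n : nat.
Variable R : pzRingType.

Lemma vpf_pact (P : seq (vec n)) (q : R) (s : 'S_n) x :
  uniq P -> (forall r, r \in P -> pact s r \in P) ->
  vpf P q (pact s x) = vpf P q x.
Proof.
move=> uP cP; rewrite !vpfE.
have -> : (\sum_i `|pact s x i|)%N = (\sum_i `|x i|)%N by apply: (sumn_pact s absz).
set N := (\sum_i `|x i|)%N.
have hlt (k : 'I_(size P)) : (index (pact s (nth 0%R P k)) P < size P)%N.
  by rewrite index_mem; apply: cP; apply: mem_nth.
pose pi (k : 'I_(size P)) : 'I_(size P) := Ordinal (hlt k).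
have hpi k : P`_(pi k) = pact s (P`_k) by rewrite nth_index //; apply: cP; apply: mem_nth.
have pi_inj : injective pi.
  move=> k k' e; have : P`_(pi k) = P`_(pi k') by rewrite e.
  rewrite !hpi => /pact_inj /eqP; rewrite nth_uniq // => /eqP; apply: val_inj.
rewrite -(vpfI_reindex (fun k : 'I_(size P) => P`_k) q N (pact s x) (injF_bij pi_inj)).
rewrite (vpfI_eq (r2 := fun k : 'I_(size P) => pact s (P`_k))); last by move=> k; apply: hpi.
rewrite /vpfI; apply: eq_bigl => m.
have -> : \sum_(i : 'I_(size P)) pact s (P`_i) *+ m i = pact s (\sum_(i : 'I_(size P)) P`_i *+ m i).
  by rewrite pact_sum; apply: eq_bigr => i _; rewrite pactMn.
by rewrite (inj_eq (@pact_inj _ s)).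
Qed.

End Inv.

Section Cat.
Variable n : nat.
Variable R : pzRingType.

Definition vpfN (rs : seq (vec n)) (q : R) N b :=
  vpfI (fun k : 'I_(size rs) => rs`_k) q N b.

Lemma vpf_cat (rs1 rs2 : seq (vec n)) (q : R) N b :
  vpfN (rs1 ++ rs2) q N b =
  \sum_(m2 : {ffun 'I_(size rs2) -> 'I_N.+1}) q ^+ (\sum_j (m2 j : nat))%N *
    vpfN rs1 q N (b - \sum_(j : 'I_(size rs2)) rs2`_j *+ m2 j).
Proof.
rewrite /vpfN -vpfI_sum.
pose e (x : 'I_(size rs1) + 'I_(size rs2)) : 'I_(size (rs1 ++ rs2)) :=
  cast_ord (esym (size_cat rs1 rs2)) (unsplit x).
have eb : bijective e.
  exists (fun k => split (cast_ord (size_cat rs1 rs2) k)) => x.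
    by rewrite /e cast_ordKV unsplitK.
  by rewrite /e splitK cast_ordK.
rewrite -(vpfI_reindex _ q N b eb); apply: vpfI_eq => -[x|y] /=.
  by rewrite nth_cat /= ltn_ord.
by rewrite nth_cat /= ltnNge leq_addr /= addKn.
Qed.

End Cat.

Section Sort.
Variable n : nat.

Definition sdec (w : vec n) := forall i j : 'I_n, (i < j)%N -> w j < w i.

Lemma sdec_le w : sdec w -> forall i j : 'I_n, (i <= j)%N -> w j <= w i.
Proof.
move=> h i j; rewrite leq_eqVlt => /orP[/eqP e|/h /ltW //].
by have -> : i = j by apply: val_inj.
Qed.

Lemma rhoE (i : 'I_n) : Posz (n - i)%N = n%:Z - (i : nat)%:Z.
Proof. by rewrite subzn // ltnW. Qed.

Lemma nonincr_sdec g : nonincr g -> sdec (g + rho n).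
Proof.
move=> /forallP h i j ij; have /forallP /(_ j) := h i; rewrite (ltnW ij) /=.
rewrite !ffunE !rhoE => le; move: ij; rewrite -ltz_nat => ij; lra.
Qed.

Lemma sdec_gap w : sdec w -> forall d (i j : 'I_n), (j = i + d :> nat)%N ->
  w j + (j : nat)%:Z <= w i + (i : nat)%:Z.
Proof.
move=> h; elim=> [|d IH] i j e.
  by have -> : j = i by apply: val_inj; rewrite /= e addn0.
have hk : (i + d < n)%N by have := ltn_ord j; rewrite e; lia.
have := IH i (Ordinal hk) erefl.
have : w j < w (Ordinal hk) by apply: h; rewrite e /= addnS.
rewrite e /= !PoszD; lia.
Qed.

Lemma sdec_nonincr w : sdec w -> nonincr (w - rho n).
Proof.
move=> h; apply/forallP => i; apply/forallP => j; apply/implyP => ij.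
rewrite !ffunE !rhoE; have := sdec_gap h (esym (subnKC ij)).
lra.
Qed.

Lemma incr_ge (f : 'I_n -> 'I_n) : (forall i j : 'I_n, (i < j)%N -> (f i < f j)%N) ->
  forall k (hk : (k < n)%N), (k <= f (Ordinal hk))%N.
Proof.
move=> h; elim=> [//|k IH] hk.
have hk' : (k < n)%N by apply: ltnW.
have := IH hk'; have := h (Ordinal hk') (Ordinal hk) (ltnSn k); lia.
Qed.

Lemma sdec_perm w w' (s : 'S_n) : sdec w -> sdec w' -> w = pact s w' -> s = 1%g.
Proof.
move=> hw hw' e.
have incr (g : 'S_n) (u u' : vec n) : sdec u -> sdec u' -> u = pact g u' ->
    forall i j : 'I_n, (i < j)%N -> ((g^-1)%g i < (g^-1)%g j)%N.
  move=> hu hu' eu i j ij; have := hu i j ij; rewrite eu !pactE.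
  rewrite ltnNge; apply: contraTN => le; rewrite -leNgt; exact: sdec_le.
have i1 := incr s w w' hw hw' e.
have i2 := incr s^-1%g w' w hw' hw; rewrite invgK in i2.
have e' : w' = pact s^-1 w by rewrite e pactK.
have {}i2 := i2 e'.
have ge1 (i : 'I_n) : (i <= (s^-1)%g i)%N.
  by have := incr_ge i1 (ltn_ord i); congr (_ <= _)%N; congr (nat_of_ord (_ _)); apply: val_inj.
have ge2 (i : 'I_n) : (i <= s i)%N.
  by have := incr_ge i2 (ltn_ord i); congr (_ <= _)%N; congr (nat_of_ord (_ _)); apply: val_inj.
apply/permP => i; rewrite perm1; apply: val_inj; apply/eqP; rewrite eqn_leq ge2 andbT.
by have := ge1 (s i); rewrite permK.
Qed.

Definition rank (v : vec n) (i : 'I_n) := #|[set j | v i < v j]|.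

Lemma rank_lt (v : vec n) (i : 'I_n) : (rank v i < n)%N.
Proof.
have : [set j | v i < v j] \subset [set~ i].
  by apply/subsetP => j; rewrite !inE; apply: contraTN => /eqP ->; rewrite ltxx.
move/subset_leq_card; rewrite cardsC1 card_ord /rank.
by move=> h; apply: leq_ltn_trans h _; rewrite prednK // (leq_ltn_trans _ (ltn_ord i)).
Qed.

Lemma rank_mono (v : vec n) (i j : 'I_n) : v i < v j -> (rank v j < rank v i)%N.
Proof.
move=> h; apply: proper_card; apply/properP; split.
  apply/subsetP => l; rewrite !inE => hl; exact: lt_trans h hl.
by exists j; rewrite !inE ?h ?ltxx.
Qed.

Lemma sort_exists (v : vec n) : injective v ->
  exists (t : 'S_n) (w : vec n), sdec w /\ v = pact t w.
Proof.
move=> vi.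
pose rk (i : 'I_n) : 'I_n := Ordinal (rank_lt v i).
have rk_inj : injective rk.
  move=> i j /(congr1 val) /= e; apply: vi; apply/eqP; rewrite eq_le; apply/andP; split.
    rewrite leNgt; apply/negP => /rank_mono; by rewrite e ltnn.
  rewrite leNgt; apply/negP => /rank_mono; by rewrite e ltnn.
pose t' := perm rk_inj.
exists t'^-1%g, [ffun k => v (t'^-1%g k)]; split.
  move=> k k' kk'; rewrite !ffunE.
  set i := (t'^-1)%g k; set j := (t'^-1)%g k'.
  have ri : rk i = k by rewrite /i -(permE rk_inj) permKV.
  have rj : rk j = k' by rewrite /j -(permE rk_inj) permKV.
  have ij : i != j by apply: contraTN kk' => /eqP e; rewrite -ri -rj e ltnn.
  rewrite lt_neqAle; apply/andP; split.
    by apply: contra ij => /eqP /vi ->.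
  rewrite leNgt; apply/negP => /rank_mono.
  by rewrite -[rank v j]/(val (rk j)) -[rank v i]/(val (rk i)) ri rj ltnNge (ltnW kk').
by apply/ffunP => i; rewrite pactE ffunE invgK permK.
Qed.

End Sort.

Lemma sum_lists (T : eqType) (V : nmodType) (A B : seq T) (h : T -> V) :
  uniq A -> uniq B -> (forall x, h x != 0 -> x \in A /\ x \in B) ->
  \sum_(x <- A) h x = \sum_(x <- B) h x.
Proof.
move=> uA uB hAB.
have E (C D : seq T) : (forall x, h x != 0 -> x \in D) ->
    \sum_(x <- C) h x = \sum_(x <- filter (mem D) C) h x.
  move=> hD; rewrite big_filter [RHS]big_mkcond; apply: eq_bigr => x _.
  case: ifP => //= xD; apply/eqP; apply: contraFT xD => /hD.
  by [].
rewrite (E A B) ?(E B A); first last.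
- by move=> x /hAB [].
- by move=> x /hAB [].
apply: perm_big; apply: uniq_perm; rewrite ?filter_uniq // => x.
by rewrite !mem_filter andbC.
Qed.

Lemma big_pred1_seq (T : eqType) (V : nmodType) (s : seq T) (z : T) (F : T -> V) :
  uniq s -> \sum_(x <- s | x == z) F x = if z \in s then F z else 0.
Proof.
move=> us; case: ifP => zs.
  by rewrite -big_filter (@filter_pred1_uniq _ s z us zs) big_seq1.
rewrite big_seq_cond big1 // => x /andP[xs /eqP ex]; subst x.
by rewrite xs in zs.
Qed.

Section Box.
Variable n : nat.

Definition Box (B : nat) : seq (vec n) :=
  map (fun f : {ffun 'I_n -> 'I_(B.*2).+1} => [ffun i => (f i : nat)%:Z - B%:Z])
      (enum {ffun 'I_n -> 'I_(B.*2).+1}).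

Lemma uniq_Box B : uniq (Box B).
Proof.
rewrite map_inj_uniq ?enum_uniq // => f g e; apply/ffunP => i; apply: val_inj.
by move: (congr1 (fun v : vec n => v i) e); rewrite !ffunE => /addIr /eqP; rewrite eqz_nat => /eqP.
Qed.

Lemma mem_Box B (v : vec n) : (forall i, `|v i| <= B%:Z) -> v \in Box B.
Proof.
move=> h; apply/mapP.
have hlt i : (absz (v i + B%:Z)%R < (B.*2).+1)%N.
  rewrite ltnS -lez_nat abszE -muln2 PoszM; have := h i; case: (v i) => k /=; lia.
exists [ffun i => Ordinal (hlt i)]; first by rewrite mem_enum.
apply/ffunP => i; rewrite !ffunE /= abszE ger0_norm ?addrK //.
have := h i; lia.
Qed.

Lemma box_bound (v : vec n) (M : nat) (W : int) :
  (forall i, v i <= M%:Z) -> wt v = W ->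
  forall i, `|v i| <= (`|W|%N + n * M)%N%:Z.
Proof.
move=> hM hW i.
have e := hW; rewrite /wt (bigD1 i) //= in e.
have hs : W - v i <= (n * M)%N%:Z.
  rewrite -e addrAC subrr add0r.
  apply: le_trans (_ : \sum_(j < n) M%:Z <= _).
    rewrite [X in _ <= X](bigD1 i) //=; apply: le_trans (_ : \sum_(j | j != i) M%:Z <= _).
      by apply: ler_sum => j _.
    by rewrite lerDr.
  rewrite sumr_const card_ord PoszM -mulr_natr natz mulrC. done.
have hi := hM i.
have hn : (M <= n * M)%N by rewrite leq_pmull // (leq_ltn_trans _ (ltn_ord i)).
rewrite PoszD abszE; move: hn; rewrite -lez_nat => hn.
have hw := lexx `|W|; rewrite ler_norml in hw; case/andP: hw => hw1 hw2.
rewrite ler_norml; apply/andP; split; lia.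
Qed.

End Box.

Lemma vpfI_sol n (R : pzRingType) (I : finType) (r : I -> vec n) (q : R) N b :
  vpfI r q N b != 0 -> exists m : I -> nat, \sum_i r i *+ m i = b.
Proof.
rewrite /vpfI; case: (pickP (fun m : {ffun I -> 'I_N.+1} => \sum_i r i *+ m i == b)).
  by move=> m /eqP e _; exists (fun i => nat_of_ord (m i)).
by move=> h; rewrite big_pred0 ?eqxx.
Qed.

Lemma vecB n (a b : vec n) i : (a - b) i = a i - b i.
Proof. by rewrite !ffunE. Qed.

Lemma sum_nz (I : finType) (V : nmodType) (f : I -> V) :
  \sum_i f i != 0 -> exists i, f i != 0.
Proof.
case: (pickP (fun i => f i != 0)) => [i h|h]; first by move=> _; exists i.
by rewrite big1 ?eqxx // => i _; move/negbFE: (h i) => /eqP.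
Qed.

Section Main.
Variable n : nat.
Variables la mu : vec n.
Variable P : seq (vec n).
Hypothesis goodP : forall r, r \in P -> goodr r.
Hypothesis nnP : forall r l, r \in P -> 0 <= r l.
Hypothesis wtP : forall r, r \in P -> wt r = 2.
Hypothesis uniqP : uniq P.
Hypothesis cP : forall s r, r \in P -> pact s r \in P.

Local Notation PR := {poly int}.
Local Notation q := ('X^2 : PR).

Definition G (x : vec n) : PR := PA q (x - mu).
Definition cnt (x : vec n) : PR := vpf P 1 x.
Definition F (k : vec n) : PR := \sum_(s : 'S_n) sgn _ s * cnt (dot s la - k).
Definition delta N (m : {ffun 'I_(size P) -> 'I_N.+1}) : vec n :=
  \sum_(j : 'I_(size P)) P`_j *+ m j.
Definition beta (s : 'S_n) := pact s (la + rho n) - (mu + rho n).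
Definition Nb := (\sum_(s : 'S_n) \sum_i `|beta s i|)%N.
Definition Mb := ((\sum_i `|la i|) + n)%N.
Definition Bb := (`|wt mu|%N + n * Mb)%N.

Lemma goodPn (k : 'I_(size P)) : goodr P`_k.
Proof. by apply: goodP; apply: mem_nth. Qed.
Lemma goodAn (k : 'I_(size (rootsA n))) : goodr (rootsA n)`_k.
Proof. by apply: goodA; apply: mem_nth. Qed.

Lemma PA_sol (y : vec n) : PA q y != 0 ->
  exists m : 'I_(size (rootsA n)) -> nat, \sum_(k : 'I_(size (rootsA n))) (rootsA n)`_k *+ m k = y.
Proof. by rewrite /PA vpfE => /vpfI_sol. Qed.

Lemma PA_wt (y : vec n) : PA q y != 0 -> wt y = 0.
Proof.
case/PA_sol => m <-; rewrite wt_sum big1 // => k _.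
by rewrite wtMn wtA ?mul0rn //; apply: mem_nth.
Qed.

Lemma G_wt (x : vec n) : G x != 0 -> wt x = wt mu.
Proof. by move/PA_wt; rewrite wtB => /eqP; rewrite subr_eq0 => /eqP. Qed.

Lemma cnt_nn (x : vec n) : cnt x != 0 -> forall l, 0 <= x l.
Proof.
rewrite /cnt vpfE => /vpfI_sol [m <-] l; rewrite sum_ffunE; apply: sumr_ge0 => k _.
by rewrite ffunMnE; apply: mulrn_wge0; apply: nnP; apply: mem_nth.
Qed.

Lemma le_sumabs (v : vec n) (i : 'I_n) : `|v i| <= ((\sum_l `|v l|)%N)%:Z.
Proof.
rewrite Posz_sum (bigD1 i) //= abszE lerDl; apply: sumr_ge0 => l _; by [].
Qed.

Lemma dot_le s i : dot s la i <= Mb%:Z.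
Proof.
rewrite /dot !ffunE.
have h1 := ltn_ord ((s^-1)%g i); have h2 := ltn_ord i.
have := le_sumabs la ((s^-1)%g i); have := ler_norm (la ((s^-1)%g i)).
rewrite /Mb PoszD.
set a := la _; set S := Posz (\sum__ _)%N. lia.
Qed.

Lemma F_supp (k : vec n) : F k != 0 -> forall i, k i <= Mb%:Z.
Proof.
case/sum_nz => s; rewrite mulf_eq0 negb_or => /andP[_ /cnt_nn h] i.
have := h i; rewrite [(_ - k) i]ffunE [(- k) i]ffunE subr_ge0 => hk; exact: le_trans hk (dot_le s i).
Qed.

Lemma inBox (x : vec n) : (forall i, x i <= Mb%:Z) -> wt x = wt mu -> x \in Box n Bb.
Proof. by move=> h1 h2; apply: mem_Box; apply: box_bound h1 h2. Qed.

Lemma beta_le s : ((\sum_i `|beta s i|) <= Nb)%N.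
Proof. by rewrite /Nb (bigD1 s) //= leq_addr. Qed.

Lemma wt_beta s : wt (beta s) = wt la - wt mu.
Proof. rewrite /beta wtB wt_pact !wtD; lia. Qed.

Lemma beta_dot s : beta s = dot s la - mu.
Proof. by apply/ffunP => i; rewrite /beta /dot !ffunE; ring. Qed.

Lemma good_cat (k : 'I_(size (rootsA n ++ P))) : goodr (rootsA n ++ P)`_k.
Proof.
have := mem_nth 0 (ltn_ord k); rewrite mem_cat => /orP[/goodA|/goodP] //.
Qed.

Lemma prenn0 : prenn (0 : vec n).
Proof. by move=> c; rewrite /pre phi0. Qed.

Lemma prenn_delta N (m2 : {ffun 'I_(size P) -> 'I_N.+1}) : prenn (delta m2).
Proof. by apply: prenn_sum => j; case: (goodPn j). Qed.

Lemma wt_delta N (m2 : {ffun 'I_(size P) -> 'I_N.+1}) :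
  wt (delta m2) = (2 * \sum_j (m2 j : nat))%N%:Z.
Proof.
rewrite /delta wt_sum PoszM Posz_sum mulr_sumr; apply: eq_bigr => j _.
rewrite wtMn wtP; last by apply: mem_nth.
by rewrite -[Posz (m2 j)]natz mulr_natr.
Qed.

Lemma stepB s :
  vpf (rootsA n ++ P) q (beta s) =
  'X ^+ `|wt la - wt mu|%N *
    \sum_(m2 : {ffun 'I_(size P) -> 'I_Nb.+1}) G (dot s la - delta m2).
Proof.
rewrite vpfE (@vpfI_widen _ _ _ _ q _ Nb); last first.
  move=> m hm k; have hm0 : \sum_(i : 'I_(size (rootsA n ++ P))) (rootsA n ++ P)`_i *+ m i + 0 = beta s by rewrite addr0.
  have := @cone _ _ _ m 0 (beta s) good_cat prenn0 hm0 k.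
  by move=> h; split => //; apply: leq_trans h (beta_le s).
rewrite -/(vpfN (rootsA n ++ P) q Nb (beta s)).
rewrite vpf_cat mulr_sumr; apply: eq_bigr => m2 _.
rewrite -/(delta m2).
have eG : G (dot s la - delta m2) = PA q (beta s - delta m2) by rewrite /G beta_dot addrAC.
have eA : vpfN (rootsA n) q Nb (beta s - delta m2) = PA q (beta s - delta m2).
  rewrite /PA vpfE /vpfN; apply: vpfI_widen => m1 hm1 k; split; last first.
    have hm0 : \sum_(i : 'I_(size (rootsA n))) (rootsA n)`_i *+ m1 i + 0 = beta s - delta m2 by rewrite addr0.
    exact: (@cone _ _ _ m1 0 _ goodAn prenn0 hm0 k).
  apply: leq_trans (beta_le s).
  have hm0 : \sum_(i : 'I_(size (rootsA n))) (rootsA n)`_i *+ m1 i + delta m2 = beta s by rewrite hm1 subrK.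
  exact: (@cone _ _ _ m1 _ _ goodAn (prenn_delta m2) hm0 k).
rewrite eG eA.
case: (eqVneq (PA q (beta s - delta m2)) 0) => [->|nz]; first by rewrite !mulr0.
have := PA_wt nz; rewrite wtB wt_beta wt_delta => /eqP; rewrite subr_eq0 => /eqP ->.
by rewrite /= exprM.
Qed.

Lemma delta_nn N (m2 : {ffun 'I_(size P) -> 'I_N.+1}) l : 0 <= delta m2 l.
Proof.
rewrite /delta sum_ffunE; apply: sumr_ge0 => k _.
by rewrite ffunMnE; apply: mulrn_wge0; apply: nnP; apply: mem_nth.
Qed.

Lemma G_box (z : vec n) s N (m2 : {ffun 'I_(size P) -> 'I_N.+1}) :
  z = dot s la - delta m2 -> G z != 0 -> z \in Box n Bb.
Proof.
move=> -> nz; apply: inBox; last exact: G_wt.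
move=> i; rewrite vecB; apply: le_trans (dot_le s i).
by rewrite lerBlDr lerDl; apply: delta_nn.
Qed.

Lemma stepC s :
  \sum_(m2 : {ffun 'I_(size P) -> 'I_Nb.+1}) G (dot s la - delta m2) =
  \sum_(k <- Box n Bb) G k * cnt (dot s la - k).
Proof.
have E k : G k * cnt (dot s la - k) =
    \sum_(m2 : {ffun 'I_(size P) -> 'I_Nb.+1} | delta m2 == dot s la - k) G k.
  case: (eqVneq (G k) 0) => [->|nz]; first by rewrite mul0r big1.
  under [RHS]eq_bigr => m2 _ do rewrite -[G k]mulr1.
  rewrite -mulr_sumr; congr (_ * _).
  rewrite /cnt vpfE (@vpfI_widen _ _ _ _ _ _ Nb).
    by rewrite /vpfI; apply: eq_bigr => m2 _; rewrite expr1n.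
  move=> m hm i; split.
    have hm0 : \sum_(i : 'I_(size P)) P`_i *+ m i + 0 = dot s la - k by rewrite addr0.
    exact: (@cone _ _ _ m 0 _ goodPn prenn0 hm0 i).
  apply: leq_trans (beta_le s).
  have [m1 hm1] := PA_sol nz.
  have hm0 : \sum_(i : 'I_(size P)) P`_i *+ m i +
      \sum_(i : 'I_(size (rootsA n))) (rootsA n)`_i *+ m1 i = beta s.
    by rewrite hm hm1 beta_dot addrA subrK.
  apply: (@cone _ _ _ m _ _ goodPn _ hm0 i).
  by apply: prenn_sum => j; case: (goodAn j).
under [RHS]eq_bigr => k _ do rewrite E big_mkcond.
rewrite exchange_big; apply: eq_bigr => m2 _ /=.
rewrite -big_mkcond.
rewrite [RHS](eq_bigl (fun k => k == dot s la - delta m2)); last first.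
  by move=> k; apply/eqP/eqP => e; rewrite e opprB addrC subrK.
rewrite big_pred1_seq ?uniq_Box //; case: ifP => // nb.
apply/eqP; apply: contraFT nb => nz.
by apply: (G_box (s:=s) (m2:=m2)).
Qed.

Lemma cnt_pact (t : 'S_n) (x : vec n) : cnt (pact t x) = cnt x.
Proof. exact: vpf_pact uniqP (cP t). Qed.

Lemma F_alt (t : 'S_n) (k : vec n) : F (dot t k) = sgn _ t * F k.
Proof.
rewrite /F mulr_sumr (reindex_inj (mulIg t)) /=.
apply: eq_bigr => s _.
have -> : dot (s * t) la - dot t k = pact t (dot s la - k).
  rewrite /dot !pactB pactM pactD.
  by apply/ffunP => i; rewrite !ffunE; ring.
by rewrite cnt_pact sgnM; ring.
Qed.

Lemma F_sing (k : vec n) (i j : 'I_n) : i != j -> (k + rho n) i = (k + rho n) j -> F k = 0.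
Proof.
move=> ij e.
have hv : pact (tperm i j) (k + rho n) = k + rho n.
  apply/ffunP => l; rewrite pactE tpermV; case: tpermP => [->|->|] //.
have hd : dot (tperm i j) k = k by rewrite /dot hv addrK.
have := F_alt (tperm i j) k; rewrite hd /sgn odd_tperm ij expr1 mulN1r => h.
apply/polyP => d; have := congr1 (fun p : {poly int} => p`_d) h; rewrite coefN coef0.
by move=> /eqP; rewrite -addr_eq0 -mulr2n mulrn_eq0 /= => /eqP.
Qed.

Lemma F_reg (k : vec n) : F k != 0 -> exists t g, nonincr g /\ k = dot t g.
Proof.
move=> nz.
have inj : injective (k + rho n).
  move=> i j e; apply/eqP; apply: contraTT nz => ij; rewrite negbK; apply/eqP.
  exact: F_sing ij e.
have [t [w [sw e]]] := sort_exists inj.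
exists t, (w - rho n); split; first exact: sdec_nonincr.
by rewrite /dot subrK -e addrK.
Qed.

Lemma dot_inj (t t' : 'S_n) (g g' : vec n) : nonincr g -> nonincr g' -> dot t g = dot t' g' -> t = t' /\ g = g'.
Proof.
move=> hg hg' e.
have e1 : pact t (g + rho n) = pact t' (g' + rho n) by move: e; rewrite /dot => /addIr.
have e2 : g + rho n = pact (t' * t^-1) (g' + rho n) by rewrite -pactM -e1 pactK.
have h1 := sdec_perm (nonincr_sdec hg) (nonincr_sdec hg') e2.
have tt : t' = t by rewrite -(mulgKV t t') h1 mul1g.
by subst t'; split => //; move: e2; rewrite h1 pact1 => /addIr ->.
Qed.

Definition sl := filter (@nonincr n) (Box n Bb).
Definition Im := [seq dot t g | g <- sl, t <- index_enum {perm 'I_n}].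

Lemma uniq_Im : uniq Im.
Proof.
apply: allpairs_uniq; [by rewrite filter_uniq ?uniq_Box | exact: index_enum_uniq|].
move=> [g t] [g' t'] /allpairsP[[x y] [hx _ ex]] /allpairsP[[x' y'] [hx' _ ex']] /= e.
case: ex => ??; case: ex' => ??; subst.
move: hx hx'; rewrite !mem_filter => /andP[hx _] /andP[hx' _].
have [e1 e2] := dot_inj hx hx' e; move: e2 => /= e2; by rewrite e1 e2.
Qed.

Definition term (g : vec n) : PR :=
  \sum_(s : 'S_n) sgn _ s * cnt (dot s la - g) * KA q g mu.

Lemma KA_G (g : vec n) : KA q g mu = \sum_t sgn _ t * G (dot t g).
Proof.
apply: eq_bigr => t _; congr (_ * _).
by rewrite /G /dot opprD addrA addrAC.
Qed.

Lemma term_H (g : vec n) : term g = \sum_t G (dot t g) * F (dot t g).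
Proof.
rewrite /term -mulr_suml -/(F g) KA_G mulr_sumr; apply: eq_bigr => t _.
rewrite F_alt; ring.
Qed.

Lemma term_supp (g : vec n) : term g != 0 -> g \in Box n Bb.
Proof.
rewrite term_H => /sum_nz [t]; rewrite mulf_eq0 negb_or => /andP[hG hF].
move: hF; rewrite F_alt mulf_eq0 negb_or => /andP[_ hF].
apply: inBox; first exact: F_supp.
by rewrite -(wt_dot t); apply: G_wt.
Qed.

Lemma H_in (k : vec n) : G k * F k != 0 -> k \in Box n Bb /\ k \in Im.
Proof.
rewrite mulf_eq0 negb_or => /andP[hG hF]; split.
  by apply: inBox; [exact: F_supp | exact: G_wt].
have [t [g [hg ek]]] := F_reg hF.
move: hF; rewrite ek F_alt mulf_eq0 negb_or => /andP[_ hF].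
have hgB : g \in Box n Bb.
  apply: inBox; first exact: F_supp.
  by rewrite -(wt_dot t) -ek; apply: G_wt.
apply/allpairsP; exists (g, t); split => //=; last exact: mem_index_enum.
by rewrite mem_filter hg.
Qed.

Lemma mainP : exists v : PR, fsum_eq (@nonincr n) term v /\
  \sum_(s : 'S_n) sgn _ s * vpf (rootsA n ++ P) q (beta s) = 'X ^+ `|wt la - wt mu|%N * v.
Proof.
exists (\sum_(g <- sl) term g); split.
  exists sl; split => //; first by rewrite filter_uniq ?uniq_Box.
    exact: filter_all.
  move=> g hg gs; apply/eqP; apply: contraNT gs => nz.
  by rewrite mem_filter hg term_supp.
under eq_bigr => s _ do rewrite stepB stepC mulrCA.
rewrite -mulr_sumr; congr (_ * _).
under eq_bigr => s _ do rewrite mulr_sumr.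
rewrite exchange_big /=.
rewrite (eq_bigr (fun k => G k * F k)); last first.
  move=> k _; rewrite /F mulr_sumr; apply: eq_bigr => s _; ring.
rewrite (sum_lists (B := Im)) ?uniq_Box ?uniq_Im //; last exact: H_in.
rewrite big_allpairs_dep /=; apply: eq_bigr => g _.
by rewrite term_H.
Qed.

End Main.

Theorem mainTheorem2 (n : nat) (la mu : vec n) :
  is_partition la -> is_partition mu -> wt mu <= wt la ->
  (exists v : {poly int},
     fsum_eq (@nonincr n)
       (fun g => \sum_(s : 'S_n) sgn _ s * cfun _ (dot s la - g) * KA ('X^2) g mu) v
     /\ KC ('X^2 : {poly int}) la mu = 'X ^+ `|wt la - wt mu|%N * v)
  /\
  (exists v : {poly int},
     fsum_eq (@nonincr n)
       (fun g => \sum_(s : 'S_n) sgn _ s * dfun _ (dot s la - g) * KA ('X^2) g mu) v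
     /\ KD ('X^2 : {poly int}) la mu = 'X ^+ `|wt la - wt mu|%N * v).
Proof.
move=> _ _ _; split.
  exact: (@mainP n la mu (pairsC n) (@goodC n) (@nnC n) (@wtC n) (@uniqC n) (@pactC n)).
exact: (@mainP n la mu (pairsD n) (@goodD n) (@nnD n) (@wtD' n) (@uniqD n) (@pactD' n)).
Qed.
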